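(* Let $K$ be a field, $\mathcal A$ a $K$-algebra, $\vartheta$ any one of the four types (left, right, pre-two-sided, two-sided), and $M$ a $\vartheta$-Mathieu subspace of $\mathcal A$. Let $a\in\mathcal A$ be algebraic over $K$ with $a^m\in M$ for all $m\ge 1$, and let $k\ge 0$ be the multiplicity of $0\in K$ as a root of the minimal polynomial of $a$ over $K$. Then $(a^k)_\vartheta\subseteq M$. In particular, for $\vartheta\neq$ pre-two-sided, the $\vartheta$-ideal of $\mathcal A$ generated by $a^k$ is contained in $M$.
   Context: All algebras are associative and unital. Let $M$ be a $K$-subspace of $\mathcal A$. $M$ is a left (resp. right) Mathieu subspace if whenever $a\in\mathcal A$ satisfies $a^m\in M$ for all $m\ge1$, then for every $b\in\mathcal A$ there is $N$ with $ba^m\in M$ (resp. $a^mb\in M$) for all $m\ge N$. $M$ is a pre-two-sided Mathieu subspace if it is both a left and a right Mathieu subspace. $M$ is a two-sided Mathieu subspace if whenever $a^m\in M$ for all $m\ge1$, then for all $b,c\in\mathcal A$ there is $N$ with $ba^mc\in M$ for all $m\ge N$. A $\vartheta$-Mathieu subspace is one of the type $\vartheta$. A $\vartheta$-ideal means a left ideal if $\vartheta$ = left, a right ideal if $\vartheta$ = right, and a two-sided ideal if $\vartheta$ is pre-two-sided or two-sided. For $x\in\mathcal A$: $(x)_\vartheta$ is the left ideal $\mathcal Ax$ if $\vartheta$ = left, the right ideal $x\mathcal A$ if $\vartheta$ = right, the two-sided ideal generated by $x$ if $\vartheta$ = two-sided, and $x\mathcal A+\mathcal Ax$ if $\vartheta$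 = pre-two-sided. *)

(* Defs.v *)
From HB Require Import structures.
From mathcomp Require Import all_boot all_order all_algebra.
Set Implicit Arguments. Unset Strict Implicit. Unset Printing Implicit Defensive.
Import GRing.Theory.
Local Open Scope ring_scope.

Inductive mtype := MLeft | MRight | MPreTwo | MTwo.

Section Mathieu.
Variables (K : fieldType) (A : algType K).

Definition all_powers_in (M : {pred A}) (a : A) : Prop :=
  forall m : nat, (1 <= m)%N -> a ^+ m \in M.

Definition left_Mathieu (M : {pred A}) : Prop :=
  forall a : A, all_powers_in M a ->
    forall b : A, exists N : nat, forall m : nat, (N <= m)%N -> b * a ^+ m \in M.

Definition right_Mathieu (M : {pred A}) : Prop :=
  forall a : A, all_powers_in M a ->
    forall b : A, exists N : nat, forall m : nat, (N <= m)%N -> a ^+ m * b \in M.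

Definition pre_two_sided_Mathieu (M : {pred A}) : Prop :=
  left_Mathieu M /\ right_Mathieu M.

Definition two_sided_Mathieu (M : {pred A}) : Prop :=
  forall a : A, all_powers_in M a ->
    forall b c : A, exists N : nat, forall m : nat, (N <= m)%N -> b * a ^+ m * c \in M.

Definition Mathieu (t : mtype) (M : {pred A}) : Prop :=
  match t with
  | MLeft => left_Mathieu M
  | MRight => right_Mathieu M
  | MPreTwo => pre_two_sided_Mathieu M
  | MTwo => two_sided_Mathieu M
  end.

Definition gen_set (t : mtype) (x : A) (y : A) : Prop :=
  match t with
  | MLeft => exists b : A, y = b * x
  | MRight => exists b : A, y = x * b
  | MPreTwo => exists b c : A, y = x * b + c * x
  | MTwo => exists s : seq (A * A), y = \sum_(bc <- s) bc.1 * x * bc.2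
  end.

Definition is_minpoly (a : A) (p : {poly K}) : Prop :=
  [/\ p \is monic, horner_alg a p = 0 &
      forall q : {poly K}, q != 0 -> horner_alg a q = 0 -> (size p <= size q)%N].

Definition algebraic_over (a : A) : Prop :=
  exists2 q : {poly K}, q != 0 & horner_alg a q = 0.

End Mathieu.

(* Main.v *)
Require Import Defs.
From HB Require Import structures.
From mathcomp Require Import all_boot all_order all_algebra.
From mathcomp Require Import ring.
Import GRing.Theory.
Local Open Scope ring_scope.

Section Aux.
Variables (K : fieldType) (A : algType K) (M : {pred A}).
Hypothesis hM : submod_closed M.

Lemma M0 : 0 \in M. Proof. by case: hM. Qed.
Lemma MD u v : u \in M -> v \in M -> u + v \in M.
Proof. case: hM => _ h hu hv; have := h 1 u v hu hv; by rewrite scale1r. Qed.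
Lemma MZ c u : u \in M -> c *: u \in M.
Proof. case: hM => h0 h hu; have := h c u 0 hu h0; by rewrite addr0. Qed.

Lemma eval_in (a : A) (f : A -> A) (N : nat)
  (fD : forall x y, f (x + y) = f x + f y) (fZ : forall c x, f (c *: x) = c *: f x)
  (f0 : f 0 = 0) (hf : forall m, (N <= m)%N -> f (a ^+ m) \in M) :
  forall t n, (N <= n)%N -> f (horner_alg a ('X^n * t)) \in M.
Proof.
elim/poly_ind => [|t c IH] n hn.
  by rewrite mulr0 rmorph0 f0 M0.
have P : 'X^n * (t * 'X + c%:P) = 'X^(n.+1) * t + c%:P * 'X^n.
  by rewrite exprS; ring.
have E : horner_alg a (c%:P * 'X^n) = c *: a ^+ n.
  by rewrite rmorphM /= horner_algC rmorphXn /= horner_algX mulr_algl.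
have -> : horner_alg a ('X^n * (t * 'X + c%:P)) = horner_alg a ('X^(n.+1) * t) + c *: a ^+ n.
  by rewrite P rmorphD; congr (_ + _); exact: E.
rewrite fD fZ.
apply: MD; first by apply: IH; apply: leqW.
by apply: MZ; apply: hf.
Qed.
End Aux.

Theorem theorem3p9 (K : fieldType) (A : algType K) (t : mtype) (M : {pred A})
  (hM : submod_closed M) (hMath : Mathieu t M)
  (a : A) (halg : algebraic_over a) (hpow : all_powers_in M a)
  (p : {poly K}) (hp : is_minpoly a p) :
  forall y : A, gen_set t (a ^+ mup 0 p) y -> y \in M.
Proof.
case: hp => pmon pa _.
have pn0 : p != 0 by apply: monic_neq0.
set k := mup 0 p.
have hX : forall n, ('X - (0:K)%:P) ^+ n = 'X^n :> {poly K}.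
  by move=> n; rewrite subr0.
have /dvdpP [q pq] : 'X^k %| p by rewrite -hX -mup_geq.
have ndv : ~~ ('X^(k.+1) %| p) by rewrite -hX -mup_ltn.
clearbody k.
have nq0 : ~~ root q 0.
  apply/negP => /factor_theorem [r qr].
  move/negP: ndv; apply; apply/dvdpP; exists r.
  by rewrite pq qr subr0 exprS; ring.
set c := q.[0].
have cn0 : c != 0 by [].
have /factor_theorem [r qr] : root (q - c%:P) 0.
  by rewrite /root hornerD hornerN hornerC subrr.
rewrite subr0 in qr.
have base : 'X^k = 'X^(k.+1) * (- (c^-1%:P * r)) + c^-1%:P * p.
  have hc : c^-1%:P * c%:P = 1 :> {poly K} by rewrite -polyCM mulVf.
  have -> : p = (r * 'X + c%:P) * 'X^k by rewrite pq -qr; ring.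
  transitivity ('X^k * (c^-1%:P * c%:P)); first by rewrite hc mulr1.
  by rewrite exprS; ring.
have key : forall m, exists s u, 'X^k = 'X^(k + m) * s + u * p.
  elim=> [|m [s [u IH]]]; first by exists 1, 0; rewrite addn0 mulr1 mul0r addr0.
  exists (s * (- (c^-1%:P * r))), (u + 'X^m * s * c^-1%:P).
  rewrite {1}IH.
  have -> : 'X^(k + m) = 'X^m * 'X^k :> {poly K} by rewrite exprD mulrC.
  rewrite {1}base addnS !exprS exprD; ring.
have ev : forall m, exists s, a ^+ k = horner_alg a ('X^(k + m) * s).
  move=> m; have [s [u e]] := key m; exists s.
  have hD : forall u v, horner_alg a (u + v) = horner_alg a u + horner_alg a v.
    by move=> ??; exact: rmorphD.
  have hMl : forall u v, horner_alg a (u * v) = horner_alg a u * horner_alg a v.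
    by move=> ??; exact: rmorphM.
  have hXn : forall n, horner_alg a 'X^n = a ^+ n.
    elim=> [|n IHn]; first by rewrite !expr0; exact: rmorph1.
    by rewrite !exprSr hMl IHn horner_algX.
  by rewrite -hXn {1}e hD (hMl u p) pa mulr0 addr0.
have gen : forall (f : A -> A),
    (forall x y, f (x + y) = f x + f y) -> (forall c x, f (c *: x) = c *: f x) ->
    f 0 = 0 -> (exists N, forall m, (N <= m)%N -> f (a ^+ m) \in M) ->
    f (a ^+ k) \in M.
  move=> f fD fZ f0 [N hN]; have [s ->] := ev N.
  exact: (@eval_in K A M hM a f N fD fZ f0 hN s (k + N) (leq_addl k N)).
case: t hMath => /= hMath y.
- case=> b ->; apply: (gen (fun x => b * x)).
  + by move=> ??; rewrite mulrDr.
  + by move=> ??; rewrite scalerAr.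
  + by rewrite mulr0.
  + exact: hMath hpow b.
- case=> b ->; apply: (gen (fun x => x * b)).
  + by move=> ??; rewrite mulrDl.
  + by move=> ??; rewrite -scalerAl.
  + by rewrite mul0r.
  + exact: hMath _ hpow b.
- case: hMath => hL hR [b [c' ->]]; apply: (@MD K A M hM).
  + apply: (gen (fun x => x * b)).
    * by move=> ??; rewrite mulrDl.
    * by move=> ??; rewrite -scalerAl.
    * by rewrite mul0r.
    * exact: hR _ hpow b.
  + apply: (gen (fun x => c' * x)).
    * by move=> ??; rewrite mulrDr.
    * by move=> ??; rewrite scalerAr.
    * by rewrite mulr0.
    * exact: hL _ hpow c'.
- case=> s ->; elim: s => [|[b c'] s IH]; first by rewrite big_nil (@M0 K A M hM).
  rewrite big_cons; apply: (@MD K A M hM) => //=.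
  apply: (gen (fun x => b * x * c')).
  + by move=> ??; rewrite mulrDr mulrDl.
  + by move=> ??; rewrite -scalerAr -scalerAl.
  + by rewrite mulr0 mul0r.
  + exact: hMath _ hpow b c'.
Qed.
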